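(* Let $S$ be a set of pairwise disjoint line segments in the plane in general position, $H\subset S$, and $s_1,s_2\in S\setminus H$ distinct. There is an unbounded Voronoi edge in $\mathcal{V}_{|H|+1}(S)$ separating the regions $V_{|H|+1}(H\cup\{s_1\},S)$ and $V_{|H|+1}(H\cup\{s_2\},S)$ if and only if there exists a supporting halfplane of $s_1,s_2$ and $H$.
   Context: Distances are Euclidean: $d(x,s)=\min_{q\in s}d(x,q)$. For $|H'|=k$, $V_k(H',S)=\{x : d(x,s)<d(x,t)\ \forall s\in H',\ \forall t\in S\setminus H'\}$, and $\mathcal{V}_k(S)$ is the partition of the plane into these regions. A supporting halfplane of $s_1,s_2\notin H$ and $H$ is an open halfplane $h$ whose boundary line passes through at least one endpoint of $s_1$ and at least one endpoint of $s_2$, such that $h$ intersects all segments of $H$ and no segment of $S\setminus H$. General position: no more than three segments touch the same circle and no more than two endpoints are collinear. *)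

(* Defs.v *)
From Stdlib Require Import Reals Lra List Classical ClassicalEpsilon.
Open Scope R_scope.

Definition point : Type := (R * R)%type.

Definition eucl (x y : point) : R :=
  sqrt ((fst x - fst y) ^ 2 + (snd x - snd y) ^ 2).

Record segment : Type := mkSeg { sa : point ; sb : point }.

Definition on_seg (s : segment) (q : point) : Prop :=
  exists t : R, 0 <= t <= 1 /\
    q = (fst (sa s) + t * (fst (sb s) - fst (sa s)),
         snd (sa s) + t * (snd (sb s) - snd (sa s))).

Definition is_endpoint (s : segment) (q : point) : Prop :=
  q = sa s \/ q = sb s.

Definition is_min_dist (x : point) (s : segment) (r : R) : Prop :=
  (exists q, on_seg s q /\ eucl x q = r) /\
  (forall q, on_seg s q -> r <= eucl x q).

Definition dist (x : point) (s : segment) : R :=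
  epsilon (inhabits 0) (fun r => is_min_dist x s r).

(* Order-k Voronoi region V_k(H',S) (k = |H'|), with H' given as a predicate. *)
Definition voronoi_region (H' : segment -> Prop) (S : list segment) (x : point) : Prop :=
  forall s t, H' s -> In t S -> ~ H' t -> dist x s < dist x t.

Definition closure (A : point -> Prop) (x : point) : Prop :=
  forall eps, 0 < eps -> exists y, A y /\ eucl x y < eps.

Definition unbounded (A : point -> Prop) : Prop :=
  forall M : R, exists x, A x /\ M < eucl x (0, 0).

Definition add_seg (H : list segment) (s : segment) : segment -> Prop :=
  fun t => In t H \/ t = s.

(* There is an unbounded Voronoi edge separating V(H∪{s1},S) and V(H∪{s2},S):
   the common boundary (intersection of the closures) of the two regions is
   unbounded. *)
Definition unbounded_voronoi_edge (S H : list segment) (s1 s2 : segment) : Prop :=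
  unbounded (fun x => closure (voronoi_region (add_seg H s1) S) x /\
                      closure (voronoi_region (add_seg H s2) S) x).

Definition in_open_halfplane (a b c : R) (q : point) : Prop :=
  a * fst q + b * snd q > c.

Definition on_line (a b c : R) (q : point) : Prop :=
  a * fst q + b * snd q = c.

Definition supporting_halfplane (S H : list segment) (s1 s2 : segment) (a b c : R) : Prop :=
  (a <> 0 \/ b <> 0) /\
  (exists e1, is_endpoint s1 e1 /\ on_line a b c e1) /\
  (exists e2, is_endpoint s2 e2 /\ on_line a b c e2) /\
  (forall h, In h H -> exists q, on_seg h q /\ in_open_halfplane a b c q) /\
  (forall t, In t S -> ~ In t H -> forall q, on_seg t q -> ~ in_open_halfplane a b c q).

Definition pairwise_disjoint (S : list segment) : Prop :=
  forall s t, In s S -> In t S -> s <> t -> forall q, on_seg s q -> ~ on_seg t q.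

Definition collinear (p q r : point) : Prop :=
  (fst q - fst p) * (snd r - snd p) - (snd q - snd p) * (fst r - fst p) = 0.

Definition touches_circle (s : segment) (c : point) (r : R) : Prop :=
  dist c s = r.

Definition general_position (S : list segment) : Prop :=
  (forall (c : point) (r : R), 0 < r ->
     forall s1 s2 s3 s4, In s1 S -> In s2 S -> In s3 S -> In s4 S ->
       s1 <> s2 -> s1 <> s3 -> s1 <> s4 -> s2 <> s3 -> s2 <> s4 -> s3 <> s4 ->
       ~ (touches_circle s1 c r /\ touches_circle s2 c r /\
          touches_circle s3 c r /\ touches_circle s4 c r)) /\
  (forall p q r, (exists s, In s S /\ is_endpoint s p) ->
                 (exists s, In s S /\ is_endpoint s q) ->
                 (exists s, In s S /\ is_endpoint s r) ->
                 p <> q -> p <> r -> q <> r -> ~ collinear p q r).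

(* Main.v *)
Require Import Defs.
From Stdlib Require Import Reals List.
From Stdlib Require Import Lra Psatz Classical ClassicalEpsilon Rgeom.
Open Scope R_scope.

Definition sq (x y : point) : R := (fst x - fst y)^2 + (snd x - snd y)^2.

Lemma sq_nonneg x y : 0 <= sq x y.
Proof. unfold sq. pose proof (pow2_ge_0 (fst x - fst y)). pose proof (pow2_ge_0 (snd x - snd y)). lra. Qed.

Lemma eucl_sym x y : eucl x y = eucl y x.
Proof. unfold eucl; f_equal; ring. Qed.

Lemma eucl_tri x y z : eucl x z <= eucl x y + eucl y z.
Proof.
  destruct x as [x1 x2], y as [y1 y2], z as [z1 z2].
  pose proof (triangle x1 x2 z1 z2 y1 y2) as T.
  unfold dist_euc, Rsqr in T. unfold eucl; cbn [fst snd].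
  replace ((x1 - z1) ^ 2 + (x2 - z2) ^ 2) with ((x1 - z1) * (x1 - z1) + (x2 - z2) * (x2 - z2)) by ring.
  replace ((x1 - y1) ^ 2 + (x2 - y2) ^ 2) with ((x1 - y1) * (x1 - y1) + (x2 - y2) * (x2 - y2)) by ring.
  replace ((y1 - z1) ^ 2 + (y2 - z2) ^ 2) with ((y1 - z1) * (y1 - z1) + (y2 - z2) * (y2 - z2)) by ring.
  exact T.
Qed.

Lemma proj_exists x s : exists q, on_seg s q /\ forall q', on_seg s q' -> sq x q <= sq x q'.
Proof.
  destruct s as [[a1 a2] [b1 b2]]; destruct x as [x1 x2]; simpl.
  set (D := (b1 - a1)^2 + (b2 - a2)^2).
  set (p := (x1 - a1)*(b1-a1) + (x2-a2)*(b2-a2)).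
  assert (HD : 0 <= D) by (unfold D; pose proof (pow2_ge_0 (b1-a1)); pose proof (pow2_ge_0 (b2-a2)); lra).
  assert (key : forall t u, sq (x1,x2) (a1 + t*(b1-a1), a2 + t*(b2-a2)) -
      sq (x1,x2) (a1 + u*(b1-a1), a2 + u*(b2-a2)) = (t - u) * ((t + u) * D - 2 * p)).
  { intros; unfold sq, D, p; simpl; ring. }
  clearbody D p.
  assert (Hpick : exists u, 0 <= u <= 1 /\ forall t, 0 <= t <= 1 -> 0 <= (t - u) * ((t + u) * D - 2 * p)).
  { clear key x1 x2.
    destruct (Rle_lt_dec p 0) as [Hp|Hp].
    - exists 0; split; [lra|]. intros t Ht. nra.
    - destruct (Rle_lt_dec D p) as [Hq|Hq].
      + exists 1; split; [lra|]. intros t Ht. replace ((t - 1) * ((t + 1) * D - 2 * p)) with ((1-t)*(2*p - (t+1)*D)) by ring; apply Rmult_le_pos; nra.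
      + assert (0 < D) by lra. exists (p / D). split.
        * split; [apply Rle_mult_inv_pos; lra|]. apply (Rmult_le_reg_r D); [lra|].
          field_simplify; lra.
        * intros t Ht. replace ((t - p / D) * ((t + p / D) * D - 2 * p)) with (D * (t - p/D)^2) by (field; lra).
          apply Rmult_le_pos; [lra|apply pow2_ge_0]. }
  destruct Hpick as [u [Hu Hmin]].
  exists (a1 + u*(b1-a1), a2 + u*(b2-a2)). split.
  - exists u; split; auto.
  - intros q' [t [Ht ->]]. simpl. pose proof (key t u). pose proof (Hmin t Ht). simpl in *. lra.
Qed.

Lemma min_unique x s r1 r2 : is_min_dist x s r1 -> is_min_dist x s r2 -> r1 = r2.
Proof.
  intros [[q1 [H1 E1]] L1] [[q2 [H2 E2]] L2].
  pose proof (L1 q2 H2). pose proof (L2 q1 H1). lra.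
Qed.

Lemma dist_spec x s : is_min_dist x s (Defs.dist x s).
Proof.
  unfold Defs.dist. apply epsilon_spec.
  destruct (proj_exists x s) as [q [Hq Hm]].
  exists (eucl x q). split.
  - exists q; auto.
  - intros q' Hq'. unfold eucl. apply sqrt_le_1_alt. apply (Hm q' Hq').
Qed.

Lemma dist_le x s q : on_seg s q -> Defs.dist x s <= eucl x q.
Proof. intros H. destruct (dist_spec x s) as [_ L]. auto. Qed.

Lemma dist_att x s : exists q, on_seg s q /\ Defs.dist x s = eucl x q.
Proof. destruct (dist_spec x s) as [[q [H E]] _]. exists q; auto. Qed.

Lemma dist_nonneg x s : 0 <= Defs.dist x s.
Proof. destruct (dist_att x s) as [q [_ E]]. rewrite E. apply sqrt_pos. Qed.

Lemma dist_lip x y s : Defs.dist y s <= Defs.dist x s + eucl x y.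
Proof.
  destruct (dist_att x s) as [q [Hq E]]. rewrite E.
  pose proof (dist_le y s q Hq). pose proof (eucl_tri y x q). rewrite (eucl_sym y x) in *. lra.
Qed.

Lemma closure_le (H' : segment -> Prop) S x s t :
  Defs.closure (voronoi_region H' S) x -> H' s -> In t S -> ~ H' t -> Defs.dist x s <= Defs.dist x t.
Proof.
  intros Hc Hs Ht Hnt. destruct (Rle_dec (Defs.dist x s) (Defs.dist x t)) as [|Hlt]; auto.
  exfalso. set (e := (Defs.dist x s - Defs.dist x t) / 2).
  destruct (Hc e) as [y [Hy Hxy]]; [unfold e; lra|].
  pose proof (Hy s t Hs Ht Hnt).
  pose proof (dist_lip x y t). pose proof (dist_lip y x s). rewrite (eucl_sym y x) in *.
  unfold e in *; lra.
Qed.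

Lemma dist_eq_of x s e : on_seg s e -> (forall q, on_seg s q -> sq x e <= sq x q) -> Defs.dist x s = eucl x e.
Proof.
  intros He Hm. apply (min_unique x s). apply dist_spec.
  split.
  - exists e; auto.
  - intros q Hq. unfold eucl. apply sqrt_le_1_alt. apply Hm; auto.
Qed.

Definition lin (al be ga : R) (q : point) : R := al * fst q + be * snd q + ga.

Lemma on_seg_sa s : on_seg s (sa s).
Proof. exists 0. split; [lra|]. destruct (sa s); simpl; f_equal; ring. Qed.
Lemma on_seg_sb s : on_seg s (sb s).
Proof. exists 1. split; [lra|]. destruct (sa s), (sb s); simpl; f_equal; ring. Qed.

Lemma seg_lin_le s al be ga m q : on_seg s q -> lin al be ga (sa s) <= m -> lin al be ga (sb s) <= m -> lin al be ga q <= m.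
Proof.
  intros [t [Ht ->]]. unfold lin. destruct (sa s) as [a1 a2], (sb s) as [b1 b2]; simpl. nra.
Qed.

Lemma seg_lin_max s al be ga q : on_seg s q -> lin al be ga q <= lin al be ga (sa s) \/ lin al be ga q <= lin al be ga (sb s).
Proof.
  intros [t [Ht ->]]. unfold lin. destruct (sa s) as [a1 a2], (sb s) as [b1 b2]; simpl.
  destruct (Rle_dec (al * b1 + be * b2) (al*a1 + be*a2)); [left|right]; nra.
Qed.


Lemma fin_min {A} (L : list A) (f : A -> R) : exists d, 0 < d /\ forall a, In a L -> 0 < f a -> d <= f a.
Proof.
  induction L as [|x L IH].
  - exists 1; split; [lra|]. intros a [].
  - destruct IH as [d [Hd Hm]]. destruct (Rlt_le_dec 0 (f x)) as [Hx|Hx].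
    + exists (Rmin d (f x)). split; [apply Rmin_pos; auto|].
      intros a [<-|Ha] Hfa; [apply Rmin_r|]. eapply Rle_trans; [apply Rmin_l|]. auto.
    + exists d; split; auto. intros a [<-|Ha] Hfa; [lra|auto].
Qed.

Lemma fin_ev {A} (L : list A) (P : A -> R -> Prop) :
  (forall a, In a L -> exists M, forall z, M <= z -> P a z) ->
  exists M, forall a, In a L -> forall z, M <= z -> P a z.
Proof.
  induction L as [|x L IH]; intros Hall.
  - exists 0. intros a [].
  - destruct IH as [M HM]. { intros a Ha; apply Hall; right; auto. }
    destruct (Hall x (or_introl eq_refl)) as [Mx HMx].
    exists (Rmax M Mx). intros a [<-|Ha] z Hz.
    + apply HMx. apply (Rle_trans _ (Rmax M Mx)); [apply Rmax_r|auto].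
    + apply HM; auto. apply (Rle_trans _ (Rmax M Mx)); [apply Rmax_l|auto].
Qed.

Lemma coord_bound (S : list segment) : exists B, 0 <= B /\ forall s, In s S -> forall q, on_seg s q ->
  -B <= fst q <= B /\ -B <= snd q <= B.
Proof.
  assert (He : exists B, 0 <= B /\ forall s, In s S ->
     (-B <= fst (sa s) <= B /\ -B <= snd (sa s) <= B) /\ (-B <= fst (sb s) <= B /\ -B <= snd (sb s) <= B)).
  { induction S as [|s S IH].
    - exists 0; split; [lra|]. intros s [].
    - destruct IH as [B [HB0 HB]].
      set (m := Rabs (fst (sa s)) + Rabs (snd (sa s)) + Rabs (fst (sb s)) + Rabs (snd (sb s))).
      assert (Hm : 0 <= m) by (unfold m; pose proof (Rabs_pos (fst (sa s))); pose proof (Rabs_pos (snd (sa s)));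
        pose proof (Rabs_pos (fst (sb s))); pose proof (Rabs_pos (snd (sb s))); lra).
      exists (B + m). split; [lra|]. intros t [<-|Ht].
      + unfold m. destruct (sa s) as [a1 a2], (sb s) as [b1 b2]; simpl.
        pose proof (Rle_abs a1); pose proof (Rle_abs (-a1)); rewrite Rabs_Ropp in *.
        pose proof (Rle_abs a2); pose proof (Rle_abs (-a2)); rewrite Rabs_Ropp in *.
        pose proof (Rle_abs b1); pose proof (Rle_abs (-b1)); rewrite Rabs_Ropp in *.
        pose proof (Rle_abs b2); pose proof (Rle_abs (-b2)); rewrite Rabs_Ropp in *.
        pose proof (Rabs_pos a1); pose proof (Rabs_pos a2); pose proof (Rabs_pos b1); pose proof (Rabs_pos b2).
        lra.
      + destruct (HB t Ht) as [[? ?] [? ?]]. lra. }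
  destruct He as [B [HB0 HB]]. exists B; split; auto.
  intros s Hs q Hq. destruct (HB s Hs) as [[Ha1 Ha2] [Hb1 Hb2]].
  split.
  - split.
    + assert (lin (-1) 0 0 q <= B). { apply (seg_lin_le s); auto; unfold lin; lra. } unfold lin in *; lra.
    + assert (lin 1 0 0 q <= B). { apply (seg_lin_le s); auto; unfold lin; lra. } unfold lin in *; lra.
  - split.
    + assert (lin 0 (-1) 0 q <= B). { apply (seg_lin_le s); auto; unfold lin; lra. } unfold lin in *; lra.
    + assert (lin 0 1 0 q <= B). { apply (seg_lin_le s); auto; unfold lin; lra. } unfold lin in *; lra.
Qed.

Definition EP (S : list segment) : list point := flat_map (fun s => sa s :: sb s :: nil) S.

Lemma in_EP S s p : In s S -> is_endpoint s p -> In p (EP S).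
Proof.
  intros Hs Hp. unfold EP. apply in_flat_map. exists s. split; auto.
  destruct Hp as [->| ->]; simpl; auto.
Qed.

Definition cr (p q r : point) : R := (fst q - fst p) * (snd r - snd p) - (snd q - snd p) * (fst r - fst p).

Lemma abs_lin a b y z m : Rabs a <= m -> Rabs b <= m -> Rabs (a * y + b * z) <= m * (Rabs y + Rabs z).
Proof.
  intros Ha Hb. eapply Rle_trans; [apply Rabs_triang|]. rewrite !Rabs_mult.
  pose proof (Rabs_pos y). pose proof (Rabs_pos z).
  assert (Rabs a * Rabs y <= m * Rabs y) by (apply Rmult_le_compat_r; auto).
  assert (Rabs b * Rabs z <= m * Rabs z) by (apply Rmult_le_compat_r; auto).
  lra.
Qed.

Definition sgn (z : R) : R := if Rle_dec 0 z then 1 else -1.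

Lemma sgn_prop z : (sgn z = 1 /\ sgn z * z = Rabs z) \/ (sgn z = -1 /\ sgn z * z = Rabs z).
Proof.
  unfold sgn. destruct (Rle_dec 0 z).
  - left. split; auto. rewrite Rabs_pos_eq; lra.
  - right. split; auto. rewrite Rabs_left1; lra.
Qed.

Lemma absB v B : -B <= v <= B -> Rabs v <= B.
Proof. intros. apply Rabs_le. lra. Qed.

Lemma core (x1 x2 u1 u2 w1 w2 p1 p2 B Phi K : R) :
  0 <= B -> 0 <= K ->
  -B <= u1 <= B -> -B <= u2 <= B -> -B <= p1 <= B -> -B <= p2 <= B -> -B <= w1 <= B -> -B <= w2 <= B ->
  Phi <= 2 * (u1 * x1 + u2 * x2) <= Phi + K ->
  Phi <= 2 * (w1 * x1 + w2 * x2) <= Phi + K ->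
  let v1 := w1 - u1 in let v2 := w2 - u2 in
  let Bt := - v1 * x2 + v2 * x1 in
  let Psi := sgn Bt * (v2 * (p1 - u1) - v1 * (p2 - u2)) in
  let X := x1^2 + x2^2 in
  let S1 := Rabs x1 + Rabs x2 in
  (2 * (p1 * x1 + p2 * x2) <= Phi + K -> Psi * X <= 2 * K * B * S1) /\
  (Phi <= 2 * (p1 * x1 + p2 * x2) -> - (2 * K * B * S1) <= Psi * X).
Proof.
  intros HB HK Hu1 Hu2 Hp1 Hp2 Hw1 Hw2 Hu Hw v1 v2 Bt Psi X S1.
  set (A := v1 * x1 + v2 * x2).
  set (Hq := - (p1 - u1) * x2 + (p2 - u2) * x1).
  set (G := (p1 - u1) * x1 + (p2 - u2) * x2).
  assert (Hid : Psi * X = - sgn Bt * A * Hq + sgn Bt * Bt * G).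
  { unfold Psi, X, A, Hq, G, Bt. ring. }
  assert (HA : - (K/2) <= A <= K/2) by (unfold A, v1, v2; lra).
  assert (HHq : Rabs Hq <= 2 * B * S1).
  { unfold Hq, S1. replace (- (p1 - u1) * x2 + (p2 - u2) * x1) with ((p2 - u2) * x1 + (-(p1 - u1)) * x2) by ring.
    apply abs_lin; apply absB; lra. }
  assert (HBt : Rabs Bt <= 2 * B * S1).
  { unfold Bt, S1, v1, v2. replace (- (w1 - u1) * x2 + (w2 - u2) * x1) with ((w2 - u2) * x1 + (-(w1 - u1)) * x2) by ring.
    apply abs_lin; apply absB; lra. }
  assert (HS1 : 0 <= S1) by (unfold S1; pose proof (Rabs_pos x1); pose proof (Rabs_pos x2); lra).
  assert (T1 : Rabs (sgn Bt * A * Hq) <= K * B * S1).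
  { rewrite !Rabs_mult. assert (Rabs (sgn Bt) = 1) by (destruct (sgn_prop Bt) as [[-> _]|[-> _]];
      [apply Rabs_R1| rewrite Rabs_left1; lra]).
    rewrite H. assert (Rabs A <= K/2) by (apply absB; lra).
    pose proof (Rabs_pos A). pose proof (Rabs_pos Hq).
    assert (Rabs A * Rabs Hq <= (K/2) * (2 * B * S1)) by (apply Rmult_le_compat; auto).
    lra. }
  pose proof (Rle_abs (sgn Bt * A * Hq)). pose proof (Rle_abs (-(sgn Bt * A * Hq))). rewrite Rabs_Ropp in *.
  assert (HsB : sgn Bt * Bt = Rabs Bt) by (destruct (sgn_prop Bt) as [[_ E]|[_ E]]; exact E).
  rewrite HsB in Hid. pose proof (Rabs_pos Bt).
  split; intros Hp.
  - assert (G <= K/2) by (unfold G; lra).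
    assert (Rabs Bt * G <= Rabs Bt * (K/2)) by (apply Rmult_le_compat_l; auto).
    assert (Rabs Bt * (K/2) <= 2 * B * S1 * (K/2)) by (apply Rmult_le_compat_r; lra).
    rewrite Hid. lra.
  - assert (- (K/2) <= G) by (unfold G; lra).
    assert (Rabs Bt * (-(K/2)) <= Rabs Bt * G) by (apply Rmult_le_compat_l; auto).
    assert (Rabs Bt * (K/2) <= 2 * B * S1 * (K/2)) by (apply Rmult_le_compat_r; lra).
    rewrite Hid. lra.
Qed.

Lemma final_contra (x1 x2 d C : R) : 0 < d -> 0 <= C ->
  d * (x1^2 + x2^2) <= C * (Rabs x1 + Rabs x2) ->
  2 * C^2 / d^2 + 1 < sqrt (x1^2 + x2^2) -> False.
Proof.
  intros Hd HC Hle Hs.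
  set (X := x1^2 + x2^2) in *. set (S1 := Rabs x1 + Rabs x2) in *.
  set (M := 2 * C^2 / d^2 + 1) in *.
  assert (HM1 : 1 <= M) by (unfold M; assert (0 <= 2 * C^2 / d^2) by (apply Rle_mult_inv_pos; nra); lra).
  assert (HX0 : 0 <= X) by (unfold X; pose proof (pow2_ge_0 x1); pose proof (pow2_ge_0 x2); lra).
  assert (HXM : M * M < X).
  { rewrite <- (sqrt_sqrt X HX0). apply Rmult_le_0_lt_compat; lra. }
  assert (HS : S1 * S1 <= 2 * X).
  { unfold S1, X. pose proof (pow2_abs x1). pose proof (pow2_abs x2).
    pose proof (pow2_ge_0 (Rabs x1 - Rabs x2)). nra. }
  assert (HS0 : 0 <= S1) by (unfold S1; pose proof (Rabs_pos x1); pose proof (Rabs_pos x2); lra).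
  assert (H1 : (d * X) * (d * X) <= (C * S1) * (C * S1)).
  { apply Rmult_le_compat; try nra. }
  assert (H2 : d * d * X <= 2 * C * C).
  { assert (0 < X) by nra. apply (Rmult_le_reg_r X); auto. nra. }
  assert (H3 : X <= 2 * C^2 / d^2).
  { apply (Rmult_le_reg_r (d^2)); [nra|]. unfold Rdiv. rewrite Rmult_assoc, Rinv_l; [nra|]. nra. }
  unfold M in *. nra.
Qed.


Lemma sq_of_le r a : 0 <= r -> r <= sqrt a -> 0 <= a -> r * r <= a.
Proof. intros H0 H1 H2. rewrite <- (sqrt_sqrt a H2). apply Rmult_le_compat; auto. Qed.

Lemma le_of_sq r a : 0 <= r -> sqrt a <= r -> 0 <= a -> a <= r * r.
Proof. intros H0 H1 H2. rewrite <- (sqrt_sqrt a H2). apply Rmult_le_compat; auto; apply sqrt_pos. Qed.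

Lemma wit_end s x1 x2 Phi q : on_seg s q -> Phi <= 2 * lin x1 x2 0 q ->
  exists e, is_endpoint s e /\ Phi <= 2 * lin x1 x2 0 e.
Proof.
  intros Hq Hp. destruct (seg_lin_max s x1 x2 0 q Hq) as [H|H].
  - exists (sa s). split; [left; auto| lra].
  - exists (sb s). split; [right; auto| lra].
Qed.

Lemma endpoint_on s e : is_endpoint s e -> on_seg s e.
Proof. intros [-> | ->]; [apply on_seg_sa | apply on_seg_sb]. Qed.

Lemma forward S H s1 s2 : pairwise_disjoint S -> general_position S -> incl H S ->
  In s1 S -> ~ In s1 H -> In s2 S -> ~ In s2 H -> s1 <> s2 ->
  unbounded_voronoi_edge S H s1 s2 -> exists a b c, supporting_halfplane S H s1 s2 a b c.
Proof.
  intros Hdis Hgp Hinc Hs1 Hn1 Hs2 Hn2 Hne Hub.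
  destruct (coord_bound S) as [B [HB0 HB]].
  set (K := 2 * B^2).
  assert (HK : 0 <= K) by (unfold K; pose proof (pow2_ge_0 B); lra).
  set (E := EP S).
  destruct (fin_min (list_prod (list_prod E E) E) (fun tr => Rabs (cr (fst (fst tr)) (snd (fst tr)) (snd tr)))) as [d [Hd Hdm]].
  set (C := 2 * K * B).
  assert (HC : 0 <= C) by (unfold C; nra).
  destruct (Hub (2 * C^2 / d^2 + 1)) as [[x1 x2] [[Hc1 Hc2] HM]].
  set (x := (x1, x2)) in *.
  set (r := Defs.dist x s1).
  assert (Hr0 : 0 <= r) by apply dist_nonneg.
  assert (Ft : forall t, In t S -> ~ In t H -> forall q, on_seg t q -> r <= eucl x q).
  { intros t Ht Hnt q Hq. destruct (classic (t = s1)) as [->|Hts].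
    - apply dist_le; auto.
    - eapply Rle_trans; [| apply dist_le; eauto]. unfold r.
      apply (closure_le (add_seg H s1) S); auto; unfold add_seg; [right; auto|].
      intros [?|?]; auto. }
  assert (Hd2 : Defs.dist x s2 <= r).
  { apply (closure_le (add_seg H s2) S); auto; unfold add_seg; [right; auto|]. intros [?|?]; auto. }
  assert (Fw : forall h, In h H \/ h = s1 \/ h = s2 -> exists q, on_seg h q /\ eucl x q <= r).
  { intros h Hh. destruct (dist_att x h) as [q [Hq E']]. exists q. split; auto. rewrite <- E'.
    destruct Hh as [Hh|[->| ->]]; [| unfold r; lra | auto].
    eapply Rle_trans; [|exact Hd2]. apply (closure_le (add_seg H s1) S); auto; unfold add_seg; [left; auto|].
    intros [?|?]; auto. }
  set (Phi := x1^2 + x2^2 - r * r).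
  assert (Gt : forall t, In t S -> ~ In t H -> forall q, on_seg t q -> 2 * lin x1 x2 0 q <= Phi + K).
  { intros t Ht Hnt q Hq. pose proof (Ft t Ht Hnt q Hq) as F.
    apply sq_of_le in F; auto; [|apply sq_nonneg].
    destruct (HB t Ht q Hq) as [Hq1 Hq2]. destruct q as [q1 q2]. unfold sq, lin, Phi, K in *; simpl in *.
    assert (q1^2 <= B^2) by nra. assert (q2^2 <= B^2) by nra. nra. }
  assert (Gw : forall h, In h S -> In h H \/ h = s1 \/ h = s2 -> exists e, is_endpoint h e /\ Phi <= 2 * lin x1 x2 0 e).
  { intros h HhS Hh. destruct (Fw h Hh) as [q [Hq Hle]]. apply (wit_end h x1 x2 Phi q Hq).
    apply le_of_sq in Hle; auto; [|apply sq_nonneg].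
    destruct q as [q1 q2]. unfold sq, lin, Phi in *; simpl in *. nra. }
  destruct (Gw s1 Hs1 (or_intror (or_introl eq_refl))) as [[u1 u2] [He1 Hu]].
  destruct (Gw s2 Hs2 (or_intror (or_intror eq_refl))) as [[w1 w2] [He2 Hw]].
  assert (Hu' := Gt s1 Hs1 Hn1 _ (endpoint_on _ _ He1)).
  assert (Hw' := Gt s2 Hs2 Hn2 _ (endpoint_on _ _ He2)).
  assert (Hneq : (u1, u2) <> (w1, w2)).
  { intros Heq. apply (Hdis s1 s2 Hs1 Hs2 Hne (u1,u2) (endpoint_on _ _ He1)). rewrite Heq. apply endpoint_on; auto. }
  assert (EB : forall s p, In s S -> is_endpoint s p -> -B <= fst p <= B /\ -B <= snd p <= B).
  { intros s p Hs Hp. apply (HB s Hs). apply endpoint_on; auto. }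
  destruct (EB _ _ Hs1 He1) as [Bu1 Bu2]. destruct (EB _ _ Hs2 He2) as [Bw1 Bw2]. cbn [fst snd] in Bu1, Bu2, Bw1, Bw2.
  set (v1 := w1 - u1). set (v2 := w2 - u2).
  set (Bt := - v1 * x2 + v2 * x1).
  set (sg := sgn Bt).
  assert (Hsg : sg = 1 \/ sg = -1) by (unfold sg; destruct (sgn_prop Bt) as [[-> _]|[-> _]]; auto).
  exists (sg * v2), (- sg * v1), (sg * (v2 * u1 - v1 * u2)).
  assert (HPsi : forall p1 p2, sg * v2 * p1 + - sg * v1 * p2 - sg * (v2 * u1 - v1 * u2)
            = sg * (v2 * (p1 - u1) - v1 * (p2 - u2))) by (intros; ring).
  assert (Hcr : forall p1 p2, cr (u1,u2) (w1,w2) (p1,p2) = v1 * (p2 - u2) - v2 * (p1 - u1)) by (intros; unfold cr, v1, v2; simpl; ring).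
  assert (Hbig : forall s p1 p2, In s S -> is_endpoint s (p1,p2) -> cr (u1,u2) (w1,w2) (p1,p2) <> 0 ->
              d <= Rabs (sg * (v2 * (p1 - u1) - v1 * (p2 - u2)))).
  { intros s p1 p2 Hs Hp Hnz.
    assert (Rabs (sg * (v2 * (p1 - u1) - v1 * (p2 - u2))) = Rabs (cr (u1,u2) (w1,w2) (p1,p2))).
    { rewrite Hcr, Rabs_mult. replace (v1 * (p2 - u2) - v2 * (p1 - u1)) with (- (v2 * (p1 - u1) - v1 * (p2 - u2))) by ring.
      rewrite Rabs_Ropp. destruct Hsg as [-> | ->]; [rewrite Rabs_R1| rewrite (Rabs_left1 (-1)) by lra]; ring. }
    rewrite H0. apply (Hdm (((u1,u2),(w1,w2)),(p1,p2))).
    - unfold E. apply in_prod; [apply in_prod|]; [apply (in_EP S s1)|apply (in_EP S s2)|apply (in_EP S s)]; auto.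
    - simpl. apply Rabs_pos_lt. auto. }
  assert (HM' : 2 * C^2 / d^2 + 1 < sqrt (x1^2 + x2^2)).
  { unfold eucl, x in HM. cbn [fst snd] in HM. replace ((x1 - 0) ^ 2 + (x2 - 0) ^ 2) with (x1^2 + x2^2) in HM by ring. exact HM. }
  assert (HX0 : 0 <= x1^2 + x2^2) by (pose proof (pow2_ge_0 x1); pose proof (pow2_ge_0 x2); lra).
  assert (Hfin : forall Psi, d * (x1^2+x2^2) <= Psi * (x1^2+x2^2) -> Psi * (x1^2+x2^2) <= C * (Rabs x1 + Rabs x2) -> False).
  { intros Psi H1 H2. apply (final_contra x1 x2 d C); auto. lra. }
  assert (Hcore : forall s p1 p2, In s S -> is_endpoint s (p1,p2) ->
     (2 * (p1 * x1 + p2 * x2) <= Phi + K -> sg * (v2 * (p1 - u1) - v1 * (p2 - u2)) * (x1^2 + x2^2) <= C * (Rabs x1 + Rabs x2)) /\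
     (Phi <= 2 * (p1 * x1 + p2 * x2) -> - (C * (Rabs x1 + Rabs x2)) <= sg * (v2 * (p1 - u1) - v1 * (p2 - u2)) * (x1^2 + x2^2))).
  { intros s p1 p2 Hs Hp. destruct (EB _ _ Hs Hp) as [Bp1 Bp2]. cbn [fst snd] in Bp1, Bp2.
    unfold lin in Hu, Hw, Hu', Hw'. cbn [fst snd] in Hu, Hw, Hu', Hw'.
    assert (Hu2 : Phi <= 2 * (u1 * x1 + u2 * x2) <= Phi + K) by lra.
    assert (Hw2 : Phi <= 2 * (w1 * x1 + w2 * x2) <= Phi + K) by lra.
    exact (core x1 x2 u1 u2 w1 w2 p1 p2 B Phi K HB0 HK Bu1 Bu2 Bp1 Bp2 Bw1 Bw2 Hu2 Hw2). }
  assert (Hsgabs : forall z, Rabs (sg * z) = Rabs z).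
  { intros z. rewrite Rabs_mult. destruct Hsg as [-> | ->]; [rewrite Rabs_R1| rewrite (Rabs_left1 (-1)) by lra]; ring. }
  assert (PT : forall t p1 p2, In t S -> ~ In t H -> is_endpoint t (p1,p2) -> sg * (v2 * (p1 - u1) - v1 * (p2 - u2)) <= 0).
  { intros t p1 p2 Ht Hnt Hp. destruct (Rle_lt_dec (sg * (v2 * (p1 - u1) - v1 * (p2 - u2))) 0) as [|Hpos]; auto.
    exfalso. assert (Hnz : cr (u1,u2) (w1,w2) (p1,p2) <> 0).
    { rewrite Hcr. intros Hz. assert (v2 * (p1 - u1) - v1 * (p2 - u2) = 0) by lra. rewrite H0 in Hpos. lra. }
    pose proof (Hbig t p1 p2 Ht Hp Hnz) as Hb. rewrite Rabs_pos_eq in Hb by lra.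
    destruct (Hcore t p1 p2 Ht Hp) as [C1 _].
    assert (2 * (p1 * x1 + p2 * x2) <= Phi + K).
    { pose proof (Gt t Ht Hnt (p1,p2) (endpoint_on _ _ Hp)) as G. unfold lin in G; cbn [fst snd] in G. lra. }
    apply (Hfin (sg * (v2 * (p1 - u1) - v1 * (p2 - u2)))); [apply Rmult_le_compat_r; auto | auto]. }
  split; [|split; [|split; [|split]]].
  - destruct (Req_dec v1 0) as [Hv1|Hv1].
    + left. intros Ha. apply Hneq. assert (v2 = 0) by (destruct Hsg as [E1|E1]; rewrite E1 in Ha; lra).
      unfold v1, v2 in *. f_equal; lra.
    + right. intros Hb. apply Hv1. destruct Hsg as [E1|E1]; rewrite E1 in Hb; lra.
  - exists (u1,u2). split; auto. unfold on_line; cbn [fst snd]. ring.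
  - exists (w1,w2). split; auto. unfold on_line; cbn [fst snd]. unfold v1, v2. ring.
  - intros h Hh. destruct (Gw h (Hinc h Hh) (or_introl Hh)) as [[p1 p2] [Hp HpP]].
    exists (p1,p2). split; [apply endpoint_on; auto|].
    unfold in_open_halfplane; cbn [fst snd].
    assert (sg * (v2 * (p1 - u1) - v1 * (p2 - u2)) > 0); [|rewrite <- HPsi in H0; lra].
    destruct (Rle_lt_dec (sg * (v2 * (p1 - u1) - v1 * (p2 - u2))) 0) as [Hneg|]; [exfalso|lra].
    assert (Hh1 : h <> s1) by (intros ->; auto). assert (Hh2 : h <> s2) by (intros ->; auto).
    assert (HpS : In h S) by (apply Hinc; auto).
    assert (Hpe1 : (p1,p2) <> (u1,u2)).
    { intros Heq. apply (Hdis h s1 HpS Hs1 Hh1 (p1,p2) (endpoint_on _ _ Hp)). rewrite Heq. apply endpoint_on; auto. }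
    assert (Hpe2 : (p1,p2) <> (w1,w2)).
    { intros Heq. apply (Hdis h s2 HpS Hs2 Hh2 (p1,p2) (endpoint_on _ _ Hp)). rewrite Heq. apply endpoint_on; auto. }
    assert (Hnz : cr (u1,u2) (w1,w2) (p1,p2) <> 0).
    { destruct Hgp as [_ Hcol]. apply (Hcol (u1,u2) (w1,w2) (p1,p2)); eauto. }
    pose proof (Hbig h p1 p2 HpS Hp Hnz) as Hb. rewrite Rabs_left1 in Hb by lra.
    destruct (Hcore h p1 p2 HpS Hp) as [_ C2].
    assert (Phi <= 2 * (p1 * x1 + p2 * x2)) by (unfold lin in HpP; cbn [fst snd] in HpP; lra).
    apply (Hfin (- (sg * (v2 * (p1 - u1) - v1 * (p2 - u2))))).
    + apply Rmult_le_compat_r; auto.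
    + specialize (C2 H0). lra.
  - intros t Ht Hnt q Hq Hopen. unfold in_open_halfplane in Hopen.
    assert (lin (sg * v2) (- sg * v1) (- (sg * (v2 * u1 - v1 * u2))) q <= 0).
    { apply (seg_lin_le t); auto.
      - destruct (sa t) as [p1 p2] eqn:Ea. unfold lin; cbn [fst snd].
        pose proof (PT t p1 p2 Ht Hnt) as P. rewrite <- HPsi in P. apply P. left; auto.
      - destruct (sb t) as [p1 p2] eqn:Ea. unfold lin; cbn [fst snd].
        pose proof (PT t p1 p2 Ht Hnt) as P. rewrite <- HPsi in P. apply P. right; auto. }
    unfold lin in H0. lra.
Qed.


Lemma pow2_pos x : x <> 0 -> 0 < x^2.
Proof. intros Hx. pose proof (Rsqr_pos_lt x Hx) as H. unfold Rsqr in H. replace (x^2) with (x*x) by ring. auto. Qed.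

Lemma line_col a b c p q r : (a <> 0 \/ b <> 0) -> on_line a b c p -> on_line a b c q -> on_line a b c r ->
  collinear p q r.
Proof.
  destruct p as [p1 p2], q as [q1 q2], r as [r1 r2]. unfold on_line, collinear; cbn [fst snd].
  intros Hab Hp Hq Hr.
  set (X := (q1 - p1) * (r2 - p2) - (q2 - p2) * (r1 - p1)).
  assert (E1 : a * X = (r2 - p2) * (a * (q1 - p1) + b * (q2 - p2)) - (q2 - p2) * (a * (r1 - p1) + b * (r2 - p2))) by (unfold X; ring).
  assert (E2 : b * X = - (r1 - p1) * (a * (q1 - p1) + b * (q2 - p2)) + (q1 - p1) * (a * (r1 - p1) + b * (r2 - p2))) by (unfold X; ring).
  replace (a * (q1 - p1) + b * (q2 - p2)) with 0 in E1, E2 by lra.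
  replace (a * (r1 - p1) + b * (r2 - p2)) with 0 in E1, E2 by lra.
  rewrite !Rmult_0_r in E1, E2. rewrite Rminus_0_r, Rplus_0_r in *.
  destruct Hab as [Ha|Hb].
  - apply Rmult_integral in E1. destruct E1; [contradiction|auto].
  - apply Rmult_integral in E2. destruct E2; [contradiction|auto].
Qed.

Lemma end_ok a b c (o e z : point) :
  a * fst o + b * snd o <= c -> (a * fst o + b * snd o = c -> o = e) ->
  exists L0, forall L, L0 <= L -> forall k, 0 <= k <= 1 ->
    L * (a * fst o + b * snd o - c) + k * (fst z * (fst o - fst e) + snd z * (snd o - snd e)) <= 0.
Proof.
  intros Hle Heq. destruct (Req_dec (a * fst o + b * snd o) c) as [Hc|Hc].
  - exists 0. intros L _ k _. pose proof (Heq Hc) as Eo. subst o. rewrite Hc. replace (fst e - fst e) with 0 by ring.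
    replace (snd e - snd e) with 0 by ring. lra.
  - set (g := c - (a * fst o + b * snd o)). assert (Hg : 0 < g) by (unfold g; lra).
    set (m := fst z * (fst o - fst e) + snd z * (snd o - snd e)).
    exists (Rabs m / g). intros L HL k Hk.
    assert (Rabs m <= L * g). { apply (Rmult_le_reg_r (/ g)). apply Rinv_0_lt_compat; auto.
      rewrite Rmult_assoc, Rinv_r by lra. rewrite Rmult_1_r. exact HL. }
    pose proof (Rle_abs m). pose proof (Rabs_pos m).
    assert (k * m <= Rabs m) by nra.
    replace (a * fst o + b * snd o - c) with (- g) by (unfold g; ring). nra.
Qed.

Lemma region_gen (S H : list segment) sA sB (y : point) Q0 Q1 Q2 Qb :
  0 <= Q0 -> Q0 <= Q1 -> Q1 < Q2 -> Q2 <= Qb ->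
  Defs.dist y sA = sqrt Q1 -> Defs.dist y sB = sqrt Q2 ->
  (forall h, In h H -> Defs.dist y h < sqrt Q0) ->
  (forall t, In t S -> ~ In t H -> t <> sA -> t <> sB -> sqrt Qb < Defs.dist y t) ->
  voronoi_region (add_seg H sA) S y.
Proof.
  intros H0 H01 H12 H2b DA DB Dh Dt s t Hs Ht Hnt. unfold add_seg in *.
  assert (S01 : sqrt Q0 <= sqrt Q1) by (apply sqrt_le_1_alt; lra).
  assert (S12 : sqrt Q1 < sqrt Q2) by (apply sqrt_lt_1_alt; lra).
  assert (S2b : sqrt Q2 <= sqrt Qb) by (apply sqrt_le_1_alt; lra).
  assert (Hd : sqrt Q1 < Defs.dist y t).
  { destruct (classic (t = sB)) as [->|HtB].
    - rewrite DB; auto.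
    - assert (sqrt Qb < Defs.dist y t) by (apply Dt; auto). lra. }
  destruct Hs as [Hs| ->].
  - pose proof (Dh s Hs). lra.
  - rewrite DA. auto.
Qed.

Lemma dist_end (s : segment) a b c (e z : point) :
  (forall o, is_endpoint s o -> a * fst o + b * snd o <= c /\ (a * fst o + b * snd o = c -> o = e)) ->
  is_endpoint s e -> a * fst e + b * snd e = c ->
  exists L0, forall L, L0 <= L -> forall k, 0 <= k <= 1 ->
    Defs.dist (fst e + L * a + k * fst z, snd e + L * b + k * snd z) s =
    eucl (fst e + L * a + k * fst z, snd e + L * b + k * snd z) e.
Proof.
  intros Ho He Hl.
  destruct (Ho (sa s) (or_introl eq_refl)) as [Ha1 Ha2].
  destruct (Ho (sb s) (or_intror eq_refl)) as [Hb1 Hb2].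
  destruct (end_ok a b c (sa s) e z Ha1 Ha2) as [La HLa].
  destruct (end_ok a b c (sb s) e z Hb1 Hb2) as [Lb HLb].
  exists (Rmax La Lb). intros L HL k Hk.
  assert (HLa' : La <= L) by (apply (Rle_trans _ (Rmax La Lb)); [apply Rmax_l|auto]).
  assert (HLb' : Lb <= L) by (apply (Rle_trans _ (Rmax La Lb)); [apply Rmax_r|auto]).
  specialize (HLa L HLa' k Hk). specialize (HLb L HLb' k Hk).
  apply dist_eq_of; [apply endpoint_on; auto|].
  intros q Hq.
  set (al := L * a + k * fst z). set (be := L * b + k * snd z).
  assert (Hlin : lin al be (- (al * fst e + be * snd e)) q <= 0).
  { apply (seg_lin_le s); auto; unfold lin, al, be.
    - destruct (sa s) as [o1 o2]; destruct e as [e1 e2]; cbn [fst snd] in *. subst c. nra.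
    - destruct (sb s) as [o1 o2]; destruct e as [e1 e2]; cbn [fst snd] in *. subst c. nra. }
  destruct q as [q1 q2], e as [e1 e2]. unfold lin, sq in *. cbn [fst snd] in *. fold al be.
  replace (e1 + L * a + k * fst z) with (e1 + al) by (unfold al; ring).
  replace (e2 + L * b + k * snd z) with (e2 + be) by (unfold be; ring).
  pose proof (pow2_ge_0 (q1 - e1)). pose proof (pow2_ge_0 (q2 - e2)).
  assert (E : (e1 + al - q1) ^ 2 + (e2 + be - q2) ^ 2 = (e1 + al - e1) ^ 2 + (e2 + be - e2) ^ 2
     - 2 * (al * q1 + be * q2 + - (al * e1 + be * e2)) + ((q1 - e1) ^ 2 + (q2 - e2)^2)) by ring.
  lra.
Qed.

Lemma gap_lemma (t : segment) a b c : (forall p, is_endpoint t p -> a * fst p + b * snd p < c) ->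
  exists g, 0 < g /\ forall q, on_seg t q -> a * fst q + b * snd q <= c - g.
Proof.
  intros Hp. pose proof (Hp (sa t) (or_introl eq_refl)). pose proof (Hp (sb t) (or_intror eq_refl)).
  exists (Rmin (c - (a * fst (sa t) + b * snd (sa t))) (c - (a * fst (sb t) + b * snd (sb t)))).
  split; [apply Rmin_pos; lra|].
  intros q Hq. pose proof (Rmin_l (c - (a * fst (sa t) + b * snd (sa t))) (c - (a * fst (sb t) + b * snd (sb t)))).
  pose proof (Rmin_r (c - (a * fst (sa t) + b * snd (sa t))) (c - (a * fst (sb t) + b * snd (sb t)))).
  assert (lin a b 0 q <= c - Rmin (c - (a * fst (sa t) + b * snd (sa t))) (c - (a * fst (sb t) + b * snd (sb t)))).
  { apply (seg_lin_le t); auto; unfold lin; lra. }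
  unfold lin in H3; lra.
Qed.

Lemma backward S H s1 s2 a b c : pairwise_disjoint S -> general_position S -> incl H S ->
  In s1 S -> ~ In s1 H -> In s2 S -> ~ In s2 H -> s1 <> s2 ->
  supporting_halfplane S H s1 s2 a b c -> unbounded_voronoi_edge S H s1 s2.
Proof.
  intros Hdis Hgp Hinc Hs1 Hn1 Hs2 Hn2 Hne [Hab [[e1 [He1 Hl1]] [[e2 [He2 Hl2]] [Hh Ht]]]].
  destruct e1 as [u1 u2], e2 as [w1 w2]. unfold on_line in Hl1, Hl2; cbn [fst snd] in Hl1, Hl2.
  assert (Hne12 : (u1,u2) <> (w1,w2)).
  { intros Heq. apply (Hdis s1 s2 Hs1 Hs2 Hne (u1,u2) (endpoint_on _ _ He1)). rewrite Heq. apply endpoint_on; auto. }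
  assert (NoThird : forall s p, In s S -> is_endpoint s p -> a * fst p + b * snd p = c -> p <> (u1,u2) -> p <> (w1,w2) -> False).
  { intros s p Hs Hp Hpl H1 H2. destruct Hgp as [_ Hcol].
    apply (Hcol (u1,u2) (w1,w2) p); [exists s1; auto | exists s2; auto | exists s; auto | auto | | |].
    - intros E; apply H1; auto.
    - intros E; apply H2; auto.
    - apply (line_col a b c); auto; unfold on_line; cbn [fst snd]; auto. }
  assert (NotOpen : forall t q, In t S -> ~ In t H -> on_seg t q -> a * fst q + b * snd q <= c).
  { intros t q H1 H2 H3. apply Rnot_gt_le. apply (Ht t H1 H2 q H3). }
  assert (Hs1end : forall o, is_endpoint s1 o -> a*fst o + b*snd o <= c /\ (a*fst o + b*snd o = c -> o = (u1,u2))).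
  { intros o Ho. split; [apply (NotOpen s1); auto; apply endpoint_on; auto|].
    intros Hoc. destruct (classic (o = (u1,u2))) as [|Hou]; auto. exfalso.
    apply (NoThird s1 o); auto. intros Heq. apply (Hdis s1 s2 Hs1 Hs2 Hne o (endpoint_on _ _ Ho)). rewrite Heq. apply endpoint_on; auto. }
  assert (Hs2end : forall o, is_endpoint s2 o -> a*fst o + b*snd o <= c /\ (a*fst o + b*snd o = c -> o = (w1,w2))).
  { intros o Ho. split; [apply (NotOpen s2); auto; apply endpoint_on; auto|].
    intros Hoc. destruct (classic (o = (w1,w2))) as [|Hou]; auto. exfalso.
    apply (NoThird s2 o); auto. intros Heq. apply (Hdis s2 s1 Hs2 Hs1 (not_eq_sym Hne) o (endpoint_on _ _ Ho)). rewrite Heq. apply endpoint_on; auto. }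
  destruct (dist_end s1 a b c (u1,u2) (w1 - u1, w2 - u2) Hs1end He1 Hl1) as [L1 HL1].
  destruct (dist_end s2 a b c (w1,w2) (u1 - w1, u2 - w2) Hs2end He2 Hl2) as [L2 HL2].
  cbn [fst snd] in HL1, HL2.
  set (v1 := w1 - u1) in *. set (v2 := w2 - u2) in *.
  set (m1 := (u1 + w1) / 2). set (m2 := (u2 + w2) / 2).
  set (N := a^2 + b^2).
  assert (HN : 0 < N).
  { unfold N. pose proof (pow2_ge_0 a). pose proof (pow2_ge_0 b).
    destruct Hab as [Ha|Hb]; [assert (0 < a^2) by (apply pow2_pos; auto) | assert (0 < b^2) by (apply pow2_pos; auto)]; lra. }
  set (D2 := v1^2 + v2^2).
  assert (HD2 : 0 < D2).
  { unfold D2. pose proof (pow2_ge_0 v1). pose proof (pow2_ge_0 v2).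
    destruct (Req_dec v1 0) as [E1|E1]; [destruct (Req_dec v2 0) as [E2|E2]|].
    - exfalso. apply Hne12. unfold v1, v2 in *. f_equal; lra.
    - assert (0 < v2^2) by (apply pow2_pos; auto). lra.
    - assert (0 < v1^2) by (apply pow2_pos; auto). lra. }
  assert (Hav : a * v1 + b * v2 = 0) by (unfold v1, v2; lra).
  assert (Hm : a * m1 + b * m2 = c) by (unfold m1, m2; lra).
  set (y := fun L tau => (m1 + L * a + tau * v1, m2 + L * b + tau * v2)).
  assert (Dist1 : forall L, L1 <= L -> forall tau, -1/2 <= tau <= 1/2 ->
     Defs.dist (y L tau) s1 = sqrt (L^2 * N + (1/2 + tau)^2 * D2)).
  { intros L HL tau Htau. specialize (HL1 L HL (1/2 + tau) ltac:(lra)).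
    replace (y L tau) with (u1 + L * a + (1/2 + tau) * v1, u2 + L * b + (1/2 + tau) * v2)
      by (unfold y, m1, m2, v1, v2; f_equal; field).
    rewrite HL1. unfold eucl; cbn [fst snd]. f_equal.
    replace ((u1 + L * a + (1 / 2 + tau) * v1 - u1) ^ 2 + (u2 + L * b + (1 / 2 + tau) * v2 - u2) ^ 2)
      with (L^2 * N + (1/2 + tau)^2 * D2 + 2 * L * (1/2 + tau) * (a * v1 + b * v2)) by (unfold N, D2; ring).
    rewrite Hav. ring. }
  assert (Dist2 : forall L, L2 <= L -> forall tau, -1/2 <= tau <= 1/2 ->
     Defs.dist (y L tau) s2 = sqrt (L^2 * N + (1/2 - tau)^2 * D2)).
  { intros L HL tau Htau. specialize (HL2 L HL (1/2 - tau) ltac:(lra)).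
    replace (y L tau) with (w1 + L * a + (1/2 - tau) * (u1 - w1), w2 + L * b + (1/2 - tau) * (u2 - w2))
      by (unfold y, m1, m2, v1, v2; f_equal; field).
    rewrite HL2. unfold eucl; cbn [fst snd]. f_equal.
    replace ((w1 + L * a + (1 / 2 - tau) * (u1 - w1) - w1) ^ 2 + (w2 + L * b + (1 / 2 - tau) * (u2 - w2) - w2) ^ 2)
      with (L^2 * N + (1/2 - tau)^2 * D2 - 2 * L * (1/2 - tau) * (a * v1 + b * v2)) by (unfold N, D2, v1, v2; ring).
    rewrite Hav. ring. }
  assert (Tfar : forall t, In t S -> exists L0, forall L, L0 <= L -> ~ In t H -> t <> s1 -> t <> s2 ->
     forall tau, -1/2 <= tau <= 1/2 -> forall q, on_seg t q -> L^2 * N + D2 < sq (y L tau) q).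
  { intros t HtS. destruct (classic (~ In t H /\ t <> s1 /\ t <> s2)) as [[Hnt [Ht1 Ht2]]|Hno];
      [| exists 0; intros L _ H1 H2 H3; exfalso; apply Hno; auto].
    destruct (gap_lemma t a b c) as [g [Hg Hgq]].
    { intros p Hp. assert (a * fst p + b * snd p <= c) by (apply (NotOpen t); auto; apply endpoint_on; auto).
      destruct (Req_dec (a * fst p + b * snd p) c) as [E|E]; [exfalso|lra].
      apply (NoThird t p); auto.
      - intros Heq. apply (Hdis t s1 HtS Hs1 Ht1 p (endpoint_on _ _ Hp)). rewrite Heq. apply endpoint_on; auto.
      - intros Heq. apply (Hdis t s2 HtS Hs2 Ht2 p (endpoint_on _ _ Hp)). rewrite Heq. apply endpoint_on; auto. }
    exists (D2 / (2 * g)). intros L HL _ _ _ tau Htau q Hq.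
    pose proof (Hgq q Hq) as Hqg.
    assert (HL0 : 0 <= L) by (apply (Rle_trans _ (D2 / (2 * g))); auto; apply Rle_mult_inv_pos; lra).
    assert (HLg : D2 <= 2 * L * g).
    { apply (Rmult_le_reg_r (/ (2 * g))). apply Rinv_0_lt_compat; lra.
      replace (2 * L * g * / (2 * g)) with L by (field; lra). exact HL. }
    destruct q as [q1 q2]. cbn [fst snd] in Hqg. unfold sq, y; cbn [fst snd].
    set (P := a * (m1 + L * a + tau * v1 - q1) + b * (m2 + L * b + tau * v2 - q2)).
    set (Q := b * (m1 + L * a + tau * v1 - q1) - a * (m2 + L * b + tau * v2 - q2)).
    assert (HP : P = c + L * N - (a * q1 + b * q2)).
    { unfold P, N. replace (a * (m1 + L * a + tau * v1 - q1) + b * (m2 + L * b + tau * v2 - q2))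
        with ((a * m1 + b * m2) + L * (a^2 + b^2) + tau * (a * v1 + b * v2) - (a * q1 + b * q2)) by ring.
      rewrite Hm, Hav. ring. }
    assert (HPg : L * N + g <= P) by lra.
    assert (Hid : N * ((m1 + L * a + tau * v1 - q1) ^ 2 + (m2 + L * b + tau * v2 - q2) ^ 2) = P^2 + Q^2)
      by (unfold N, P, Q; ring).
    assert (HLN : 0 <= L * N) by (apply Rmult_le_pos; lra).
    assert (HP2 : (L * N + g)^2 <= P^2) by (apply pow_incr; lra).
    pose proof (pow2_ge_0 Q).
    assert (N * (L^2 * N + D2) < N * ((m1 + L * a + tau * v1 - q1) ^ 2 + (m2 + L * b + tau * v2 - q2) ^ 2)).
    { rewrite Hid. assert (N * D2 <= N * (2 * L * g)) by (apply Rmult_le_compat_l; lra).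
      assert (0 < g^2) by (apply pow2_pos; lra). nra. }
    apply (Rmult_lt_reg_l N); auto. }
  assert (Hnear : forall h, In h H -> exists L0, forall L, L0 <= L -> forall tau, -1/2 <= tau <= 1/2 ->
     exists q, on_seg h q /\ sq (y L tau) q < L^2 * N).
  { intros h HhH. destruct (Hh h HhH) as [[q1 q2] [Hq Hop]]. unfold in_open_halfplane in Hop; cbn [fst snd] in Hop.
    set (g := a * q1 + b * q2 - c). assert (Hg : 0 < g) by (unfold g; lra).
    set (al := b * (m1 - q1) - a * (m2 - q2)). set (ga := b * v1 - a * v2).
    exists ((g^2 + 2 * al^2 + ga^2 + 1) / (2 * N * g)). intros L HL tau Htau. exists (q1,q2). split; auto.
    assert (HLq : g^2 + 2 * al^2 + ga^2 + 1 <= 2 * N * g * L).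
    { apply (Rmult_le_reg_r (/ (2 * N * g))). apply Rinv_0_lt_compat; nra.
      replace (2 * N * g * L * / (2 * N * g)) with L by (field; lra). exact HL. }
    unfold sq, y; cbn [fst snd].
    set (P := a * (m1 + L * a + tau * v1 - q1) + b * (m2 + L * b + tau * v2 - q2)).
    set (Q := b * (m1 + L * a + tau * v1 - q1) - a * (m2 + L * b + tau * v2 - q2)).
    assert (HP : P = L * N - g).
    { unfold P, N, g. replace (a * (m1 + L * a + tau * v1 - q1) + b * (m2 + L * b + tau * v2 - q2))
        with ((a * m1 + b * m2) + L * (a^2 + b^2) + tau * (a * v1 + b * v2) - (a * q1 + b * q2)) by ring.
      rewrite Hm, Hav. ring. }
    assert (HQ : Q = al + tau * ga) by (unfold Q, al, ga; ring).
    assert (Hid : N * ((m1 + L * a + tau * v1 - q1) ^ 2 + (m2 + L * b + tau * v2 - q2) ^ 2) = P^2 + Q^2)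
      by (unfold N, P, Q; ring).
    assert (HQ2 : Q^2 <= 2 * al^2 + ga^2).
    { rewrite HQ. pose proof (pow2_ge_0 (al - tau * ga)). pose proof (pow2_ge_0 ga).
      assert (tau^2 <= 1/4) by nra. nra. }
    apply (Rmult_lt_reg_l N); auto. rewrite Hid, HP.
    nra. }
  destruct (fin_ev S (fun t L => ~ In t H -> t <> s1 -> t <> s2 -> forall tau, -1/2 <= tau <= 1/2 ->
       forall q, on_seg t q -> L^2 * N + D2 < sq (y L tau) q)) as [LT HLT].
  { intros t Ht'. destruct (Tfar t Ht') as [L0 HL0]. exists L0. intros z Hz. apply HL0; auto. }
  destruct (fin_ev H (fun h L => forall tau, -1/2 <= tau <= 1/2 ->
       exists q, on_seg h q /\ sq (y L tau) q < L^2 * N)) as [LH HLH].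
  { intros h Hh'. destruct (Hnear h Hh') as [L0 HL0]. exists L0. auto. }
  set (L0 := Rmax (Rmax L1 L2) (Rmax LT LH)).
  assert (Reg : forall L, L0 <= L -> forall tau, -1/2 <= tau <= 1/2 ->
      (tau < 0 -> voronoi_region (add_seg H s1) S (y L tau)) /\ (0 < tau -> voronoi_region (add_seg H s2) S (y L tau))).
  { intros L HL tau Htau.
    assert (HL1' : L1 <= L) by (apply (Rle_trans _ L0); auto; apply (Rle_trans _ (Rmax L1 L2)); apply Rmax_l).
    assert (HL2' : L2 <= L) by (apply (Rle_trans _ L0); auto; apply (Rle_trans _ (Rmax L1 L2)); [apply Rmax_r|apply Rmax_l]).
    assert (HLT' : LT <= L) by (apply (Rle_trans _ L0); auto; apply (Rle_trans _ (Rmax LT LH)); [apply Rmax_l|apply Rmax_r]).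
    assert (HLH' : LH <= L) by (apply (Rle_trans _ L0); auto; apply (Rle_trans _ (Rmax LT LH)); apply Rmax_r).
    assert (HQ0 : 0 <= L^2 * N) by (pose proof (pow2_ge_0 L); apply Rmult_le_pos; lra).
    assert (Dh : forall h, In h H -> Defs.dist (y L tau) h < sqrt (L^2 * N)).
    { intros h Hh'. destruct (HLH h Hh' L HLH' tau Htau) as [q [Hq Hsq]].
      eapply Rle_lt_trans; [apply dist_le; eauto|]. apply sqrt_lt_1_alt. split; [apply sq_nonneg|auto]. }
    assert (Dt : forall t, In t S -> ~ In t H -> t <> s1 -> t <> s2 -> sqrt (L^2 * N + D2) < Defs.dist (y L tau) t).
    { intros t HtS Hnt Ht1 Ht2. destruct (dist_att (y L tau) t) as [q [Hq E]]. rewrite E.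
      apply sqrt_lt_1_alt. split; [lra | apply (HLT t HtS L HLT' Hnt Ht1 Ht2 tau Htau q Hq)]. }
    pose proof (pow2_ge_0 (1/2 + tau)). pose proof (pow2_ge_0 (1/2 - tau)).
    assert ((1/2 + tau)^2 <= 1) by nra. assert ((1/2 - tau)^2 <= 1) by nra.
    split; intros Hs.
    - apply (region_gen S H s1 s2 (y L tau) (L^2*N) (L^2*N + (1/2+tau)^2*D2) (L^2*N + (1/2-tau)^2*D2) (L^2*N + D2)).
      1-4: nra.
      all: auto.
    - apply (region_gen S H s2 s1 (y L tau) (L^2*N) (L^2*N + (1/2-tau)^2*D2) (L^2*N + (1/2+tau)^2*D2) (L^2*N + D2)).
      1-4: nra.
      1-3: auto.
      intros t G1 G2 G3 G4. apply Dt; auto. }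
  assert (Close : forall L, L0 <= L -> forall eps, 0 < eps -> exists k, 0 < k <= 1/2 /\ eucl (y L 0) (y L (-k)) < eps
       /\ eucl (y L 0) (y L k) < eps).
  { intros L HL eps Heps. set (k := Rmin (1/2) (eps / (2 * (D2 + 1)))).
    assert (Hk1 : k <= 1/2) by apply Rmin_l.
    assert (Hk0 : 0 < k) by (apply Rmin_pos; [lra| apply Rdiv_lt_0_compat; lra]).
    assert (Hk2 : k * (2 * (D2 + 1)) <= eps).
    { assert (k <= eps / (2 * (D2 + 1))) by apply Rmin_r.
      apply (Rmult_le_compat_r (2 * (D2 + 1))) in H0; [|lra].
      replace (eps / (2 * (D2 + 1)) * (2 * (D2 + 1))) with eps in H0 by (field; lra). exact H0. }
    assert (Hlt : k^2 * D2 < eps^2).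
    { assert (D2 < (2 * (D2 + 1))^2) by nra.
      assert (0 < k^2) by (apply pow2_pos; lra).
      assert (k^2 * D2 < k^2 * (2 * (D2 + 1))^2) by (apply Rmult_lt_compat_l; auto).
      assert ((k * (2 * (D2 + 1)))^2 <= eps^2) by (apply pow_incr; split; [nra|auto]).
      nra. }
    assert (Hsq : 0 <= k^2 * D2) by nra.
    exists k. split; [lra|]. split.
    - unfold eucl, y; cbn [fst snd]. rewrite <- (sqrt_pow2 eps) by lra. apply sqrt_lt_1_alt.
      replace ((m1 + L * a + 0 * v1 - (m1 + L * a + - k * v1)) ^ 2 + (m2 + L * b + 0 * v2 - (m2 + L * b + - k * v2)) ^ 2)
        with (k^2 * D2) by (unfold D2; ring). lra.
    - unfold eucl, y; cbn [fst snd]. rewrite <- (sqrt_pow2 eps) by lra. apply sqrt_lt_1_alt.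
      replace ((m1 + L * a + 0 * v1 - (m1 + L * a + k * v1)) ^ 2 + (m2 + L * b + 0 * v2 - (m2 + L * b + k * v2)) ^ 2)
        with (k^2 * D2) by (unfold D2; ring). lra. }
  intros M.
  set (L := Rmax L0 (((Rabs M + 1) * (N + 1) - c) / N)).
  assert (HL0 : L0 <= L) by apply Rmax_l.
  assert (HLM : ((Rabs M + 1) * (N + 1) - c) / N <= L) by apply Rmax_r.
  exists (y L 0). split; [split|].
  - intros eps Heps. destruct (Close L HL0 eps Heps) as [k [Hk [E1 E2]]].
    exists (y L (-k)). split; auto. apply (proj1 (Reg L HL0 (-k) ltac:(lra))). lra.
  - intros eps Heps. destruct (Close L HL0 eps Heps) as [k [Hk [E1 E2]]].
    exists (y L k). split; auto. apply (proj2 (Reg L HL0 k ltac:(lra))). lra.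
  - unfold eucl, y; cbn [fst snd].
    set (X0 := (m1 + L * a + 0 * v1 - 0) ^ 2 + (m2 + L * b + 0 * v2 - 0) ^ 2).
    assert (HZ : N * X0 = (c + L * N)^2 + (b * (m1 + L * a) - a * (m2 + L * b))^2).
    { unfold X0. rewrite <- Hm. unfold N. ring. }
    assert (HLN : (Rabs M + 1) * (N + 1) <= c + L * N).
    { apply (Rmult_le_compat_r N) in HLM; [|lra].
      replace (((Rabs M + 1) * (N + 1) - c) / N * N) with ((Rabs M + 1) * (N + 1) - c) in HLM by (field; lra). lra. }
    pose proof (Rabs_pos M). pose proof (pow2_ge_0 (b * (m1 + L * a) - a * (m2 + L * b))).
    assert (Hc2 : ((Rabs M + 1) * (N + 1))^2 <= (c + L * N)^2) by (apply pow_incr; nra).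
    assert (HM2 : Rsqr M = Rabs M ^ 2) by (rewrite pow2_abs; unfold Rsqr; ring).
    assert (HX : Rsqr M < X0).
    { apply (Rmult_lt_reg_l N); auto. rewrite HZ, HM2. nra. }
    apply (Rle_lt_trans _ (Rabs M)); [apply Rle_abs|]. rewrite <- sqrt_Rsqr_abs.
    apply sqrt_lt_1_alt. split; [apply Rle_0_sqr|auto].
Qed.


Theorem corollary1 (S H : list segment) (s1 s2 : segment) :
  pairwise_disjoint S ->
  general_position S ->
  incl H S ->
  In s1 S -> ~ In s1 H ->
  In s2 S -> ~ In s2 H ->
  s1 <> s2 ->
  (unbounded_voronoi_edge S H s1 s2 <->
   exists a b c : R, supporting_halfplane S H s1 s2 a b c).
Proof.
  intros Hdis Hgp Hinc Hs1 Hn1 Hs2 Hn2 Hne. split.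
  - apply forward; auto.
  - intros [a [b [c Hsup]]]. apply (backward S H s1 s2 a b c); auto.
Qed.
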